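(* Let $q\ge 2$, $n\ge 1$ and $d_Z\ge 1$ be integers, and let ${\bf c}_1,\dots,{\bf c}_m$ be distinct strings in $\{0,1,\dots,q-1\}^n$. Let $A$ be the real matrix with $m$ columns (indexed by $k=1,\dots,m$) whose rows are: one row with all entries equal to $1$; and, for every ${\bf z}\in\{0,\dots,q-1\}^n$ with $1\le \mathrm{wt}({\bf z})\le d_Z-1$, two rows $({\bf z},0)$ and $({\bf z},1)$ with entries $A_{({\bf z},0),k}=\mathrm{Re}\,\langle {\bf c}_k|Z^{\bf z}|{\bf c}_k\rangle=\cos(2\pi\,{\bf z}^T{\bf c}_k/q)$ and $A_{({\bf z},1),k}=\mathrm{Im}\,\langle {\bf c}_k|Z^{\bf z}|{\bf c}_k\rangle=\sin(2\pi\,{\bf z}^T{\bf c}_k/q)$. Let ${\bf x}=(x_1,\dots,x_m)^T$ be a nonzero real vector with $A{\bf x}=0$, and define $x_k^+=\max\{x_k,0\}$, $x_k^-=\max\{-x_k,0\}$, $x=\sum_{k=1}^m x_k^+$, and $$|0_L\rangle=\frac{1}{\sqrt{x}}\sum_{k=1}^m\sqrt{x_k^+}\,|{\bf c}_k\rangle,\qquad |1_L\rangle=\frac{1}{\sqrt{x}}\sum_{k=1}^m\sqrt{x_k^-}\,|{\bf c}_k\rangle.$$ Then $\langle 0_L|P|0_L\rangle=\langle 1_L|P|1_L\rangle$ for every diagonal Pauli operator $P=Z^{\bf z}$ with $\mathrm{wt}({\bf z})\le d_Z-1$.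
   Context: Let $\omega=e^{2\pi i/q}$. On $\mathbb{C}^q$ with orthonormal basis $|0\rangle,\dots,|q-1\rangle$, define the generalized Pauli matrices $Z=\sum_{j=0}^{q-1}\omega^j|j\rangle\langle j|$ and $X=\sum_{j\in\mathbb{Z}_q}|j\rangle\langle j+1|$ (indices mod $q$). For ${\bf z}=(z_1,\dots,z_n)$, $Z^{\bf z}=Z^{z_1}\otimes\cdots\otimes Z^{z_n}$ is the diagonal Pauli operator of weight $\mathrm{wt}({\bf z})$, the Hamming weight (number of nonzero entries). For a string ${\bf c}=(c_1,\dots,c_n)$, $|{\bf c}\rangle=|c_1\rangle\otimes\cdots\otimes|c_n\rangle$, and ${\bf z}^T{\bf c}=\sum_i z_ic_i$. *)

(* Defs.v *)
From HB Require Import structures.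
From mathcomp Require Import all_boot all_order all_algebra.
From mathcomp Require Import complex.
From mathcomp Require Import reals trigo.
Set Implicit Arguments. Unset Strict Implicit. Unset Printing Implicit Defensive.
Import Order.TTheory GRing.Theory Num.Theory.
Local Open Scope ring_scope.
Local Open Scope complex_scope.

Definition qstring (q n : nat) := {ffun 'I_n -> 'I_q}.

Definition wt (q n : nat) (z : qstring q n) : nat := #|[set i | val (z i) != 0%N]|.

Definition zdot (q n : nat) (z c : qstring q n) : nat := (\sum_(i < n) val (z i) * val (c i))%N.

Definition omega (R : realType) (q : nat) : R[i] :=
  (cos (2 * pi / q%:R) +i* sin (2 * pi / q%:R))%C.

(* Z^z |s> = (prod_i omega^(z_i s_i)) |s> : eigenvalue of the diagonal Pauli Z^z on |s> *)
Definition Zeig (R : realType) (q n : nat) (z s : qstring q n) : R[i] :=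
  \prod_(i < n) omega R q ^+ (val (z i) * val (s i)).

(* <psi| Z^z |psi> for a state psi given by its amplitudes in the computational basis *)
Definition expect (R : realType) (q n : nat) (psi : qstring q n -> R[i]) (z : qstring q n) : R[i] :=
  \sum_(s : qstring q n) (psi s)^* * Zeig R z s * psi s.

(* row index set of A, besides the all-ones row: (z, b) with 1 <= wt z <= dZ - 1 *)
Definition zrange (q n dZ : nat) := {z : qstring q n | (1 <= wt z <= dZ - 1)%N}.
Definition Arow (q n dZ : nat) := option (zrange q n dZ * bool).

Definition Aentry (R : realType) (q n dZ m : nat) (c : 'I_m -> qstring q n)
    (r : Arow q n dZ) (k : 'I_m) : R :=
  match r with
  | None => 1
  | Some (z, false) => cos (2 * pi * (zdot (val z) (c k))%:R / q%:R)
  | Some (z, true) => sin (2 * pi * (zdot (val z) (c k))%:R / q%:R)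
  end.

Definition Amat (R : realType) (q n dZ m : nat) (c : 'I_m -> qstring q n) :
    'M[R]_(#|{: Arow q n dZ}|, m) :=
  \matrix_(i, k) Aentry R c (enum_val i) k.

Definition xplus (R : realType) (m : nat) (x : 'cV[R]_m) (k : 'I_m) : R := Num.max (x k 0) 0.
Definition xminus (R : realType) (m : nat) (x : 'cV[R]_m) (k : 'I_m) : R := Num.max (- x k 0) 0.

Definition logical_state (R : realType) (q n m : nat) (c : 'I_m -> qstring q n)
    (w : 'I_m -> R) (xtot : R) (s : qstring q n) : R[i] :=
  \sum_(k < m) if c k == s then ((Num.sqrt (w k) / Num.sqrt xtot)%:C)%C else 0.

(* Main.v *)
Require Import Defs.
From HB Require Import structures.
From mathcomp Require Import all_boot all_order all_algebra.
From mathcomp Require Import complex.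
From mathcomp Require Import reals trigo ring lra.
Import Order.TTheory GRing.Theory Num.Theory.
Local Open Scope ring_scope.
Local Open Scope complex_scope.

Lemma omegaX (R : realType) (q N : nat) :
  omega R q ^+ N = (cos (2 * pi * N%:R / q%:R) +i* sin (2 * pi * N%:R / q%:R)).
Proof.
elim: N => [|N IH].
  by rewrite expr0 mulr0 mul0r cos0 sin0.
rewrite exprSr IH /omega.
have -> : 2 * pi * N.+1%:R / q%:R = 2 * pi * N%:R / q%:R + 2 * pi / q%:R :> R.
  by rewrite -natr1; ring.
rewrite cosD sinD /=.
congr Complex; ring.
Qed.

Lemma ZeigE (R : realType) (q n : nat) (z s : qstring q n) :
  Zeig R z s = (cos (2 * pi * (zdot z s)%:R / q%:R) +i* sin (2 * pi * (zdot z s)%:R / q%:R)).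
Proof. by rewrite /Zeig prodrXr omegaX. Qed.

Lemma cplxE (R : realType) (a b : R) : a +i* b = a%:C + 'i * b%:C.
Proof. by rewrite [LHS]complexE. Qed.

Lemma psi_ck (R : realType) (q n m : nat) (c : 'I_m -> qstring q n) (w : 'I_m -> R) xt k :
  injective c -> logical_state c w xt (c k) = (Num.sqrt (w k) / Num.sqrt xt)%:C.
Proof.
move=> injc; rewrite /logical_state (bigD1 k) //= eqxx big1 ?addr0 // => j /negbTE.
by rewrite (inj_eq injc) => ->.
Qed.

Lemma expect_ls (R : realType) (q n m : nat) (c : 'I_m -> qstring q n) (w : 'I_m -> R) xt z :
  injective c -> (forall k, 0 <= w k) -> 0 <= xt ->
  expect (logical_state c w xt) z = \sum_k ((w k / xt)%:C * Zeig R z (c k)).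
Proof.
move=> injc w0 xt0; rewrite /expect.
under eq_bigr => s _ do rewrite [X in _ * X]/logical_state mulr_sumr.
rewrite exchange_big /=; apply: eq_bigr => k _.
rewrite (bigD1 (c k)) //= eqxx big1 ?addr0; last first.
  by move=> s /negbTE; rewrite eq_sym => ->; rewrite mulr0.
have cj (a : R) : ((a%:C)^*)%R = a%:C by apply: conj_Creal; rewrite complex_real.
rewrite psi_ck //. rewrite cj mulrAC -rmorphM; congr (_%:C * _).
by rewrite mulrACA -invfM -!expr2 !sqr_sqrtr.
Qed.

Lemma xpm (R : realType) (m : nat) (x : 'cV[R]_m) k : xplus x k - xminus x k = x k 0.
Proof.
rewrite /xplus /xminus /Num.Def.maxr /Order.max /=.
case: (ltrP (x k 0) 0) => h1; case: (ltrP (- x k 0) 0) => h2 /=.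
- by rewrite oppr_lt0 in h2; have := lt_trans h2 h1; rewrite ltxx.
- by rewrite sub0r opprK.
- by rewrite subr0.
- rewrite oppr_ge0 in h2; have e : x k 0 = 0 by apply: le_anti; rewrite h1 h2.
  by rewrite e oppr0 subr0.
Qed.

Theorem lemma1 (R : realType) (q n dZ m : nat) (c : 'I_m -> qstring q n)
  (x : 'cV[R]_m) :
  (2 <= q)%N -> (1 <= n)%N -> (1 <= dZ)%N ->
  injective c ->
  x != 0 ->
  Amat R dZ c *m x = 0 ->
  let xtot := \sum_(k < m) xplus x k in
  let ket0 := logical_state c (xplus x) xtot in
  let ket1 := logical_state c (xminus x) xtot in
  forall z : qstring q n, (wt z <= dZ - 1)%N ->
    expect ket0 z = expect ket1 z.
Proof.
move=> q2 n1 dZ1 injc xn0 hA xtot ket0 ket1 z wtz.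
have xp0 k : 0 <= xplus x k by rewrite /xplus le_max lexx orbT.
have xm0 k : 0 <= xminus x k by rewrite /xminus le_max lexx orbT.
have xt0 : 0 <= xtot by apply: sumr_ge0 => k _.
rewrite /ket0 /ket1 !expect_ls //.
apply/eqP; rewrite -subr_eq0 -sumrB.
have -> : \sum_k ((xplus x k / xtot)%:C * Zeig R z (c k) - (xminus x k / xtot)%:C * Zeig R z (c k))
   = (xtot^-1)%:C * \sum_k ((x k 0)%:C * Zeig R z (c k)).
  rewrite mulr_sumr; apply: eq_bigr => k _.
  by rewrite -mulrBl -rmorphB -mulrBl xpm mulrA -rmorphM [_ * x k 0]mulrC.
have hrow (r : Arow q n dZ) : \sum_k Aentry R c r k * x k 0 = 0.
  transitivity ((Amat R dZ c *m x) (enum_rank r) 0); last by rewrite hA mxE.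
  by rewrite mxE; apply: eq_bigr => k _; rewrite mxE enum_rankK.
suff [hC hS] : \sum_k x k 0 * cos (2 * pi * (zdot z (c k))%:R / q%:R) = 0 /\
               \sum_k x k 0 * sin (2 * pi * (zdot z (c k))%:R / q%:R) = 0.
  have -> : \sum_k ((x k 0)%:C * Zeig R z (c k)) =
    (\sum_k x k 0 * cos (2 * pi * (zdot z (c k))%:R / q%:R))%:C +
    'i * (\sum_k x k 0 * sin (2 * pi * (zdot z (c k))%:R / q%:R))%:C.
    rewrite !rmorph_sum mulr_sumr -big_split; apply: eq_bigr => k _.
    by rewrite ZeigE cplxE mulrDr !rmorphM mulrCA.
  by rewrite hC hS mulr0 addr0 mulr0.
case: (posnP (wt z)) => hw.
  have z0 s : zdot z s = 0%N.
    rewrite /zdot big1 // => i _.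
    move: hw; rewrite /wt => /eqP; rewrite cards_eq0 => /eqP /setP /(_ i).
    by rewrite !inE => /negbFE /eqP ->.
  split; last by under eq_bigr do rewrite z0 mulr0 mul0r sin0 mulr0; rewrite big1.
  under eq_bigr do rewrite z0 mulr0 mul0r cos0 mulr1.
  by apply: (etrans _ (hrow None)); apply: eq_bigr => k _; rewrite mul1r.
have hz : (1 <= wt z <= dZ - 1)%N by rewrite hw wtz.
pose zr : zrange q n dZ := exist _ z hz.
split.
  by apply: (etrans _ (hrow (Some (zr, false)))); apply: eq_bigr => k _; rewrite mulrC.
by apply: (etrans _ (hrow (Some (zr, true)))); apply: eq_bigr => k _; rewrite mulrC.
Qed.
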